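(* Let $(\mathbf f,\mathbf g)$ be a vector admissible system, $\epsilon\in\mathcal E$, $w\in\mathbb N$, $i_0=\lfloor (w-1)/2\rfloor$, and $L\in\mathbb N$ with $L\ge i_0$. Let $\mathbf X\in\mathcal X^{2L+w}$ with rows $\mathbf x_{-L},\dots,\mathbf x_{L+w-1}$ satisfy $\mathbf x_i=\mathbf x_{i_0}$ for all $i>i_0$. Then $$U(\mathbf S\mathbf X;\epsilon)-U(\mathbf X;\epsilon)\le -U(\mathbf x_{i_0};\epsilon),$$ where on the left $U$ is the coupled-system potential and on the right $U$ is the single-system potential.
   Context: Let $d\in\mathbb N$, $\mathcal X=[0,1]^d$, $\mathcal E=[0,1]$, $\mathcal X^\circ=\mathcal X\setminus\{\mathbf 0\}$; vectors are row vectors and $\mathbf x\preceq\mathbf y$ means $x_i\le y_i$ for all $i$. Let $\mathbf D$ be a $d\times d$ positive diagonal matrix, $\mathbf f:\mathcal X\times\mathcal E\to\mathcal X$, $\mathbf g:\mathcal X\to\mathcal X$, and $F,G$ scalar functionals with $\nabla_{\mathbf x}F(\mathbf x;\epsilon)=\mathbf f(\mathbf x;\epsilon)\mathbf D$, $\nabla G(\mathbf x)=\mathbf g(\mathbf x)\mathbf D$, $F(\mathbf 0;\epsilon)=G(\mathbf 0)=0$. $(\mathbf f,\mathbf g)$ is a vector admissible system if: (i) $\mathbf f,\mathbf g$ are $C^2$; (ii) $\mathbf f(\mathbf x;\epsilon)$, $\mathbf g(\mathbf x)$ are non-decreasing in $\mathbf x$ w.r.t. $\preceq$; (iii) for $\mathbf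 x\in\mathcal X^\circ$, $\epsilon_1<\epsilon_2$ implies $\mathbf f(\mathbf x;\epsilon_1)\preceq\mathbf f(\mathbf x;\epsilon_2)$ and $\mathbf f(\mathbf x;\epsilon_1)\ne\mathbf f(\mathbf x;\epsilon_2)$; (iv) $\mathbf f(\mathbf 0;\epsilon)=\mathbf f(\mathbf x;0)=\mathbf g(\mathbf 0)=\mathbf 0$, $F(\mathbf x;0)=0$. Single-system potential: $U(\mathbf x;\epsilon)=\mathbf g(\mathbf x)\mathbf D\mathbf x^{\mathsf T}-G(\mathbf x)-F(\mathbf g(\mathbf x);\epsilon)$. Matrices $\mathbf X\in\mathcal X^{2L+w}$ have rows $\mathbf x_{-L},\dots,\mathbf x_{L+w-1}$; vector functions act row-wise. $\mathbf A$ is the $(2L+1)\times(2L+w)$ matrix with rows indexed by $j\in\{-L,\dots,L\}$ and columns by $k\in\{-L,\dots,L+w-1\}$, $A_{j,k}=1/w$ if $0\le k-j\le w-1$ and $0$ otherwise. Coupled-system potential: $U(\mathbf X;\epsilon)=\mathrm{Tr}(\mathbf g(\mathbf X)\mathbf D\mathbf X^{\mathsf T})-\sum_{i=-L}^{L+w-1}G(\mathbf x_i)-\sum_{j=-L}^{L}F([\mathbf A\mathbf g(\mathbf X)]_j;\epsilon)$. $\mathbf S$ is the down-shift: $[\mathbf S\mathbf X]_{-L}=\mathbf 0$ and $[\mathbf S\mathbf X]_i=\mathbf x_{i-1}$ for $-L<i\le L+w-1$. *)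

(* Defs.v *)
From Stdlib Require Import Reals Lra Lia ZArith Arith.
Open Scope R_scope.

(* Vectors of R^n are encoded as functions nat -> R; only coordinates
   0..n-1 are meaningful.  Points of X = [0,1]^d are such functions with
   coordinates in [0,1] below d and equal to 0 from d on (padding). *)
Definition vec := nat -> R.

Fixpoint sumd (n : nat) (h : nat -> R) : R :=
  match n with O => 0 | S m => sumd m h + h m end.

Definition dist_n (n : nat) (y x : vec) : R := sumd n (fun i => Rabs (y i - x i)).

Definition has_grad_within (n : nat) (S : vec -> Prop) (phi : vec -> R) (x v : vec) : Prop :=
  forall eps, 0 < eps -> exists delta, 0 < delta /\
    forall y, S y -> dist_n n y x < delta ->
      Rabs (phi y - phi x - sumd n (fun i => v i * (y i - x i))) <= eps * dist_n n y x.

Definition continuous_within (n : nat) (S : vec -> Prop) (psi : vec -> R) (x : vec) : Prop :=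
  forall eps, 0 < eps -> exists delta, 0 < delta /\
    forall y, S y -> dist_n n y x < delta -> Rabs (psi y - psi x) < eps.

Definition C1_within (n : nat) (S : vec -> Prop) (phi : vec -> R) : Prop :=
  exists dphi : vec -> vec,
    (forall x, S x -> has_grad_within n S phi x (dphi x)) /\
    (forall i, (i < n)%nat -> forall x, S x -> continuous_within n S (fun y => dphi y i) x).

Definition C2_within (n : nat) (S : vec -> Prop) (phi : vec -> R) : Prop :=
  exists dphi : vec -> vec,
    (forall x, S x -> has_grad_within n S phi x (dphi x)) /\
    (forall i, (i < n)%nat -> C1_within n S (fun y => dphi y i)).

Definition inX (d : nat) (x : vec) : Prop :=
  (forall i, (i < d)%nat -> 0 <= x i <= 1) /\ (forall i, (d <= i)%nat -> x i = 0).

Definition inXo (d : nat) (x : vec) : Prop :=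
  inX d x /\ exists i, (i < d)%nat /\ x i <> 0.

Definition inE (e : R) : Prop := 0 <= e <= 1.

Definition zerov : vec := fun _ => 0.

Definition vle (d : nat) (x y : vec) : Prop := forall i, (i < d)%nat -> x i <= y i.

Definition veq (d : nat) (x y : vec) : Prop := forall i, (i < d)%nat -> x i = y i.

(* X x E seen as a subset of R^(d+1): coordinate d carries epsilon *)
Definition inXE (d : nat) (z : vec) : Prop :=
  (forall i, (i <= d)%nat -> 0 <= z i <= 1) /\ (forall i, (d < i)%nat -> z i = 0).

Definition truncv (d : nat) (z : vec) : vec := fun i => if (i <? d)%nat then z i else 0.

(* x D y^T with D = diag(Dd) *)
Definition ipD (d : nat) (Dd : vec) (x y : vec) : R := sumd d (fun i => x i * Dd i * y i).

Definition vector_admissible (d : nat) (Dd : vec)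
    (f : vec -> R -> vec) (g : vec -> vec) (F : vec -> R -> R) (G : vec -> R) : Prop :=
  (forall x e, inX d x -> inE e -> inX d (f x e)) /\
  (forall x, inX d x -> inX d (g x)) /\
  (forall k, (k < d)%nat -> C2_within (S d) (inXE d) (fun z => f (truncv d z) (z d) k)) /\
  (forall k, (k < d)%nat -> C2_within d (inX d) (fun x => g x k)) /\
  (forall e x y, inE e -> inX d x -> inX d y -> vle d x y -> vle d (f x e) (f y e)) /\
  (forall x y, inX d x -> inX d y -> vle d x y -> vle d (g x) (g y)) /\
  (forall x e1 e2, inXo d x -> inE e1 -> inE e2 -> e1 < e2 ->
      vle d (f x e1) (f x e2) /\ ~ veq d (f x e1) (f x e2)) /\
  (forall e, inE e -> veq d (f zerov e) zerov) /\
  (forall x, inX d x -> veq d (f x 0) zerov) /\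
  veq d (g zerov) zerov /\
  (forall x, inX d x -> F x 0 = 0).

Fixpoint zsum (a : Z) (n : nat) (h : Z -> R) : R :=
  match n with O => 0 | S m => zsum a m h + h (a + Z.of_nat m)%Z end.

(* row j of A * Y, where Y has rows Y i : [A Y]_j = (1/w) sum_{k=j}^{j+w-1} Y k *)
Definition Arow (w : nat) (Y : Z -> vec) (j : Z) : vec :=
  fun k => / INR w * zsum j w (fun i => Y i k).

Definition Usingle (d : nat) (Dd : vec) (g : vec -> vec) (G : vec -> R)
    (F : vec -> R -> R) (x : vec) (e : R) : R :=
  ipD d Dd (g x) x - G x - F (g x) e.

(* coupled-system potential; the matrix X has rows Xm i, i = -L..L+w-1 *)
Definition Ucoupled (d : nat) (Dd : vec) (g : vec -> vec) (G : vec -> R)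
    (F : vec -> R -> R) (L w : nat) (Xm : Z -> vec) (e : R) : R :=
  zsum (- Z.of_nat L) (2 * L + w) (fun i => ipD d Dd (g (Xm i)) (Xm i))
  - zsum (- Z.of_nat L) (2 * L + w) (fun i => G (Xm i))
  - zsum (- Z.of_nat L) (2 * L + 1) (fun j => F (Arow w (fun i => g (Xm i)) j) e).

Definition shiftS (L : nat) (Xm : Z -> vec) : Z -> vec :=
  fun i => if Z.eqb i (- Z.of_nat L) then zerov else Xm (i - 1)%Z.

(* Main.v *)
Require Import Defs.
From Stdlib Require Import Reals Lra Lia ZArith Arith FunctionalExtensionality.
From Coquelicot Require Import Coquelicot.
Open Scope R_scope.

Lemma sumd_ext n h1 h2 : (forall i, (i < n)%nat -> h1 i = h2 i) -> sumd n h1 = sumd n h2.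
Proof. induction n; simpl; intros H; [reflexivity|]. rewrite IHn by (intros; apply H; lia). rewrite H by lia. reflexivity. Qed.

Lemma sumd_le n h1 h2 : (forall i, (i < n)%nat -> h1 i <= h2 i) -> sumd n h1 <= sumd n h2.
Proof. induction n; simpl; intros H; [lra|]. assert (h1 n <= h2 n) by (apply H; lia). assert (sumd n h1 <= sumd n h2) by (apply IHn; intros; apply H; lia). lra. Qed.

Lemma sumd_scal n c h : sumd n (fun i => c * h i) = c * sumd n h.
Proof. induction n; simpl; [ring|]. rewrite IHn. ring. Qed.

Lemma sumd_abs n h : Rabs (sumd n h) <= sumd n (fun i => Rabs (h i)).
Proof. induction n; simpl. rewrite Rabs_R0; lra. eapply Rle_trans. apply Rabs_triang. lra. Qed.

Lemma sumd_nonneg n h : (forall i, (i < n)%nat -> 0 <= h i) -> 0 <= sumd n h.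
Proof. intros H. replace 0 with (sumd n (fun _ => 0)). apply sumd_le; auto.
  clear H; induction n; simpl; auto; rewrite IHn; ring. Qed.

Definition sc (t : R) (a : vec) : vec := fun k => t * a k.
Definition clamp (t : R) : R := Rmax 0 (Rmin 1 t).

Lemma clamp_in t : 0 <= clamp t <= 1.
Proof. unfold clamp, Rmax, Rmin. repeat destruct Rle_dec; lra. Qed.
Lemma clamp_id t : 0 <= t <= 1 -> clamp t = t.
Proof. intros. unfold clamp, Rmax, Rmin. repeat destruct Rle_dec; lra. Qed.
Lemma clamp_lip s t : Rabs (clamp s - clamp t) <= Rabs (s - t).
Proof. unfold clamp, Rmax, Rmin. repeat destruct Rle_dec; unfold Rabs; repeat destruct Rcase_abs; lra. Qed.

Lemma inX_sc d t a : 0 <= t <= 1 -> inX d a -> inX d (sc t a).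
Proof. intros Ht [H1 H2]; split; intros i Hi; unfold sc.
  - specialize (H1 i Hi). split. apply Rmult_le_pos; lra. 
    assert (t * a i <= 1 * 1) by (apply Rmult_le_compat; lra). lra.
  - rewrite H2 by lia. ring. Qed.

Lemma dist_sc d s t a : dist_n d (sc s a) (sc t a) = Rabs (s - t) * sumd d (fun i => Rabs (a i)).
Proof. unfold dist_n, sc. rewrite <- sumd_scal. apply sumd_ext; intros.
  replace (s * a i - t * a i) with ((s - t) * a i) by ring. apply Rabs_mult. Qed.

Lemma lin_sc d (v a : vec) s t : sumd d (fun i => v i * (sc s a i - sc t a i)) = (s - t) * sumd d (fun i => v i * a i).
Proof. rewrite <- sumd_scal. apply sumd_ext; intros. unfold sc. ring. Qed.

Section Ray.
Variables (d : nat) (phi : vec -> R) (V : vec -> vec) (a : vec).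
Hypothesis Ha : inX d a.
Hypothesis Hg : forall x, inX d x -> has_grad_within d (inX d) phi x (V x).

Let A := sumd d (fun i => Rabs (a i)).
Let W t := sumd d (fun i => V (sc t a) i * a i).

Lemma A_nonneg : 0 <= A.
Proof. unfold A. apply sumd_nonneg. intros; apply Rabs_pos. Qed.

Lemma est t : 0 <= t <= 1 -> forall e, 0 < e -> exists del, 0 < del /\
  forall s, 0 <= s <= 1 -> Rabs (s - t) < del ->
   Rabs (phi (sc s a) - phi (sc t a) - (s - t) * W t) <= e * (Rabs (s - t) * A).
Proof.
  intros Ht e He. destruct (Hg (sc t a) (inX_sc d t a Ht Ha) e He) as [del [Hdel H]].
  pose proof A_nonneg as HA0.
  exists (del / (A + 1)). split. apply Rdiv_lt_0_compat; lra.
  intros s Hs Hst. specialize (H (sc s a) (inX_sc d s a Hs Ha)).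
  rewrite dist_sc, lin_sc in H. apply H. fold A.
  apply Rle_lt_trans with (Rabs (s - t) * (A + 1)). apply Rmult_le_compat_l. apply Rabs_pos. lra.
  apply (Rmult_lt_compat_r (A + 1)) in Hst; [|lra]. unfold Rdiv in Hst.
  rewrite Rmult_assoc, Rinv_l in Hst by lra. lra.
Qed.

Let phi1 t := phi (sc (clamp t) a).

Lemma phi1_deriv c : 0 < c < 1 -> derivable_pt_lim phi1 c (W c).
Proof.
  intros Hc e He. pose proof A_nonneg as HA0.
  destruct (est c ltac:(lra) (e / (2 * (A + 1)))) as [del [Hdel H]].
  { apply Rdiv_lt_0_compat; lra. }
  assert (Hm : 0 < Rmin del (Rmin c (1 - c))).
  { repeat apply Rmin_glb_lt; lra. }
  exists (mkposreal _ Hm). intros h Hh0 Hh. simpl in Hh.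
  assert (Hh1 : Rabs h < del) by (eapply Rlt_le_trans; [apply Hh| apply Rmin_l]).
  assert (Hh2 : Rabs h < Rmin c (1 - c)) by (eapply Rlt_le_trans; [apply Hh| apply Rmin_r]).
  assert (Hh3 : Rabs h < c) by (eapply Rlt_le_trans; [apply Hh2| apply Rmin_l]).
  assert (Hh4 : Rabs h < 1 - c) by (eapply Rlt_le_trans; [apply Hh2| apply Rmin_r]).
  assert (Hb : 0 <= c + h <= 1) by (revert Hh3 Hh4; unfold Rabs; destruct Rcase_abs; lra).
  unfold phi1. rewrite !clamp_id by lra.
  specialize (H (c + h) Hb). replace (c + h - c) with h in H by ring. specialize (H Hh1).
  assert (Hah : 0 < Rabs h) by (apply Rabs_pos_lt; auto).
  replace ((phi (sc (c + h) a) - phi (sc c a)) / h - W c) with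
    ((phi (sc (c + h) a) - phi (sc c a) - h * W c) / h) by (field; auto).
  unfold Rdiv. rewrite Rabs_mult, Rabs_inv.
  apply Rle_lt_trans with (e / (2 * (A + 1)) * (Rabs h * A) * / Rabs h).
  apply Rmult_le_compat_r; [left; apply Rinv_0_lt_compat; auto | auto].
  replace (e / (2 * (A + 1)) * (Rabs h * A) * / Rabs h) with (e * (A / (2 * (A + 1)))) by (field; lra).
  assert (A / (2 * (A + 1)) < 1).
  { apply (Rmult_lt_reg_r (2 * (A + 1))). lra. unfold Rdiv. rewrite Rmult_assoc, Rinv_l; lra. }
  assert (0 <= A / (2 * (A + 1))). { apply Rdiv_le_0_compat; lra. }
  nra.
Qed.

Lemma phi1_cont t : continuity_pt phi1 t.
Proof.
  unfold continuity_pt, continue_in, limit1_in, limit_in. simpl. intros e He.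
  pose proof A_nonneg as HA0. pose (c := clamp t). pose proof (clamp_in t) as Hc.
  destruct (est c Hc 1 ltac:(lra)) as [del [Hdel H]].
  set (B := A + Rabs (W c) + 1).
  assert (HB : 0 < B) by (unfold B; pose proof (Rabs_pos (W c)); lra).
  assert (Hm : 0 < Rmin del (e / B)) by (apply Rmin_glb_lt; [lra| apply Rdiv_lt_0_compat; lra]).
  exists (Rmin del (e / B)). split; auto. intros s [_ Hs]. unfold R_dist in *.
  unfold phi1. fold c. pose proof (clamp_lip s t) as Hl. fold c in Hl.
  assert (Hs1 : Rabs (s - t) < del) by (eapply Rlt_le_trans; [apply Hs| apply Rmin_l]).
  assert (Hs2 : Rabs (s - t) < e / B) by (eapply Rlt_le_trans; [apply Hs| apply Rmin_r]).
  specialize (H (clamp s) (clamp_in s) ltac:(lra)).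
  set (u := clamp s - c) in *.
  replace (phi (sc (clamp s) a) - phi (sc c a)) with
     ((phi (sc (clamp s) a) - phi (sc c a) - u * W c) + u * W c) by (unfold u; ring).
  eapply Rle_lt_trans. apply Rabs_triang. rewrite Rabs_mult.
  apply Rle_lt_trans with (Rabs u * B).
  { unfold B. pose proof (Rabs_pos u). pose proof (Rabs_pos (W c)). nra. }
  apply Rle_lt_trans with (Rabs (s - t) * B). apply Rmult_le_compat_r; lra.
  apply (Rmult_lt_compat_r B) in Hs2; auto. unfold Rdiv in Hs2. rewrite Rmult_assoc, Rinv_l in Hs2; lra.
Qed.

Lemma ray_diff : exists c, 0 <= c <= 1 /\ phi a - phi (sc 0 a) = W c.
Proof.
  destruct (MVT_gen phi1 0 1 W) as [c [Hc E]].
  - intros x Hx. rewrite Rmin_left, Rmax_right in Hx by lra. apply is_derive_Reals. apply phi1_deriv; lra.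
  - intros; apply phi1_cont.
  - rewrite Rmin_left, Rmax_right in Hc by lra. exists c. split; auto.
    unfold phi1 in E. rewrite !clamp_id in E by lra.
    replace (sc 1 a) with a in E by (unfold sc; apply functional_extensionality; intros; ring).
    lra.
Qed.
End Ray.

Lemma ray_nonneg d phi V a : inX d a ->
  (forall x, inX d x -> has_grad_within d (inX d) phi x (V x)) ->
  (forall x, inX d x -> forall i, (i < d)%nat -> 0 <= V x i) ->
  phi zerov = 0 -> 0 <= phi a.
Proof.
  intros Ha Hg Hv H0. destruct (ray_diff d phi V a Ha Hg) as [c [Hc E]].
  replace (sc 0 a) with zerov in E by (unfold sc, zerov; apply functional_extensionality; intros; ring).
  rewrite H0 in E. rewrite Rminus_0_r in E. rewrite E. apply sumd_nonneg. intros i Hi.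
  apply Rmult_le_pos. apply Hv; auto. apply inX_sc; auto. apply (proj1 Ha i Hi).
Qed.

Lemma zsum_ext a b n h1 h2 : (forall m, (m < n)%nat -> h1 (a + Z.of_nat m)%Z = h2 (b + Z.of_nat m)%Z) ->
  zsum a n h1 = zsum b n h2.
Proof. induction n; simpl; intros H; auto. rewrite IHn by (intros; apply H; lia). rewrite H by lia. auto. Qed.

Lemma zsum_front a n h : zsum a (S n) h = h a + zsum (a + 1)%Z n h.
Proof. induction n. simpl. rewrite Z.add_0_r. ring.
  change (zsum a (S (S n)) h) with (zsum a (S n) h + h (a + Z.of_nat (S n))%Z).
  rewrite IHn. simpl. replace (a + Z.pos (Pos.of_succ_nat n))%Z with (a + 1 + Z.of_nat n)%Z by lia. ring. Qed.

Lemma zsum_const a n h c : (forall m, (m < n)%nat -> h (a + Z.of_nat m)%Z = c) -> zsum a n h = INR n * c.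
Proof. induction n; cbn [zsum]; intros H. simpl; ring. rewrite IHn by (intros; apply H; lia). rewrite H by lia.
  rewrite S_INR; ring. Qed.

Lemma zsum_bounds a n h : (forall m, (m < n)%nat -> 0 <= h (a + Z.of_nat m)%Z <= 1) -> 0 <= zsum a n h <= INR n.
Proof. induction n; cbn [zsum]; intros H. simpl; lra. assert (IH := IHn ltac:(intros; apply H; lia)).
  assert (H1 := H n ltac:(lia)). rewrite S_INR. lra. Qed.

Lemma veq_inX_eq d x y : inX d x -> inX d y -> veq d x y -> x = y.
Proof. intros [_ Hx] [_ Hy] H. apply functional_extensionality; intros k.
  destruct (Nat.lt_ge_cases k d). auto. rewrite Hx, Hy; auto. Qed.

Lemma zerov_inX d : inX d zerov.
Proof. split; intros; unfold zerov; lra. Qed.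

Lemma shift_diff (L w : nat) (Xm : Z -> vec) (x0 : vec) (h : vec -> R) : (1 <= w)%nat ->
  Xm (Z.of_nat L + Z.of_nat w - 1)%Z = x0 ->
  zsum (- Z.of_nat L) (2 * L + w) (fun i => h (shiftS L Xm i))
  - zsum (- Z.of_nat L) (2 * L + w) (fun i => h (Xm i)) = h zerov - h x0.
Proof.
  intros Hw Hx. replace (2 * L + w)%nat with (S (2 * L + w - 1)) by lia.
  rewrite zsum_front. unfold shiftS at 1. rewrite Z.eqb_refl.
  change (zsum (- Z.of_nat L) (S (2 * L + w - 1)) (fun i => h (Xm i))) with
    (zsum (- Z.of_nat L) (2 * L + w - 1) (fun i => h (Xm i)) + h (Xm (- Z.of_nat L + Z.of_nat (2 * L + w - 1))%Z)).
  replace (- Z.of_nat L + Z.of_nat (2 * L + w - 1))%Z with (Z.of_nat L + Z.of_nat w - 1)%Z by lia.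
  rewrite Hx.
  rewrite (zsum_ext _ (- Z.of_nat L) _ _ (fun i => h (Xm i))). ring.
  intros m Hm. unfold shiftS. destruct (Z.eqb_spec (- Z.of_nat L + 1 + Z.of_nat m) (- Z.of_nat L)). lia.
  f_equal. f_equal. lia.
Qed.

Theorem lemma8 (d : nat) (Dd : vec) (f : vec -> R -> vec) (g : vec -> vec)
    (F : vec -> R -> R) (G : vec -> R)
    (HD : forall i, (i < d)%nat -> 0 < Dd i)
    (HFgrad : forall e x, inE e -> inX d x ->
        has_grad_within d (inX d) (fun y => F y e) x (fun i => f x e i * Dd i))
    (HGgrad : forall x, inX d x ->
        has_grad_within d (inX d) G x (fun i => g x i * Dd i))
    (HF0 : forall e, inE e -> F zerov e = 0)
    (HG0 : G zerov = 0)
    (Hadm : vector_admissible d Dd f g F G)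
    (eps : R) (Heps : inE eps)
    (w : nat) (Hw : (1 <= w)%nat)
    (L : nat) (HL : ((w - 1) / 2 <= L)%nat)
    (Xm : Z -> vec)
    (HX : forall i, (- Z.of_nat L <= i <= Z.of_nat L + Z.of_nat w - 1)%Z -> inX d (Xm i))
    (Hconst : forall i, (Z.of_nat ((w - 1) / 2) < i <= Z.of_nat L + Z.of_nat w - 1)%Z ->
        veq d (Xm i) (Xm (Z.of_nat ((w - 1) / 2)))) :
  Ucoupled d Dd g G F L w (shiftS L Xm) eps - Ucoupled d Dd g G F L w Xm eps
    <= - Usingle d Dd g G F (Xm (Z.of_nat ((w - 1) / 2))) eps.
Proof.
  destruct Hadm as [Hf [Hg [_ [_ [_ [_ [_ [_ [_ [Hg0 _]]]]]]]]]].
  set (i0 := ((w - 1) / 2)%nat) in *.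
  set (x0 := Xm (Z.of_nat i0)).
  assert (Hi0 : (0 <= Z.of_nat i0 <= Z.of_nat L)%Z) by lia.
  assert (Hx0 : inX d x0) by (apply HX; lia).
  assert (Hrow : forall i, (Z.of_nat i0 <= i <= Z.of_nat L + Z.of_nat w - 1)%Z -> Xm i = x0).
  { intros i Hi. destruct (Z.eq_dec i (Z.of_nat i0)) as [->|Hne]. reflexivity.
    apply veq_inX_eq with d; auto. apply HX; lia. apply Hconst; lia. }
  assert (Hlast : Xm (Z.of_nat L + Z.of_nat w - 1)%Z = x0) by (apply Hrow; lia).
  assert (Hgz : g zerov = zerov) by (apply veq_inX_eq with d; auto using zerov_inX).
  unfold Ucoupled, Usingle.
  pose proof (shift_diff L w Xm x0 (fun x => ipD d Dd (g x) x) Hw Hlast) as E1.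
  pose proof (shift_diff L w Xm x0 G Hw Hlast) as E2. cbv beta in E1, E2.
  assert (Hip0 : ipD d Dd (g zerov) zerov = 0).
  { unfold ipD. transitivity (sumd d (fun _ => 0)).
    apply sumd_ext; intros; unfold zerov; ring. clear; induction d; simpl; auto; rewrite IHd; ring. }
  set (YS := fun i => g (shiftS L Xm i)).
  set (Y := fun i => g (Xm i)).
  set (a := Arow w YS (- Z.of_nat L)).
  assert (E3 : zsum (- Z.of_nat L) (2 * L + 1) (fun j => F (Arow w YS j) eps)
     - zsum (- Z.of_nat L) (2 * L + 1) (fun j => F (Arow w Y j) eps) = F a eps - F (g x0) eps).
  { replace (2 * L + 1)%nat with (S (2 * L)) by lia.
    rewrite zsum_front.
    change (zsum (- Z.of_nat L) (S (2 * L)) (fun j => F (Arow w Y j) eps)) with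
      (zsum (- Z.of_nat L) (2 * L) (fun j => F (Arow w Y j) eps) + F (Arow w Y (- Z.of_nat L + Z.of_nat (2 * L))%Z) eps).
    replace (Arow w Y (- Z.of_nat L + Z.of_nat (2 * L))%Z) with (g x0).
    rewrite (zsum_ext _ (- Z.of_nat L) _ _ (fun j => F (Arow w Y j) eps)). fold a. ring.
    { intros m Hm. f_equal. unfold Arow. apply functional_extensionality; intros k. f_equal.
      apply zsum_ext. intros m' Hm'. unfold YS, Y, shiftS.
      destruct (Z.eqb_spec (- Z.of_nat L + 1 + Z.of_nat m + Z.of_nat m') (- Z.of_nat L)). lia.
      replace (- Z.of_nat L + 1 + Z.of_nat m + Z.of_nat m' - 1)%Z with (- Z.of_nat L + Z.of_nat m + Z.of_nat m')%Z by lia. reflexivity. }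
    { unfold Arow. apply functional_extensionality; intros k.
      rewrite (zsum_const _ _ _ (g x0 k)). field. apply not_0_INR; lia.
      intros m Hm. unfold Y. rewrite Hrow. auto. lia. } }
  assert (Ha : inX d a).
  { assert (HYS : forall m, (m < w)%nat -> inX d (YS (- Z.of_nat L + Z.of_nat m)%Z)).
    { intros m Hm. unfold YS, shiftS. apply Hg.
      destruct (Z.eqb_spec (- Z.of_nat L + Z.of_nat m) (- Z.of_nat L)). apply zerov_inX.
      apply HX; lia. }
    assert (Hw' : 0 < INR w) by (apply lt_0_INR; lia).
    split; intros k Hk; unfold a, Arow.
    - assert (Hb : 0 <= zsum (- Z.of_nat L) w (fun i => YS i k) <= INR w).
      { apply zsum_bounds. intros m Hm. apply (proj1 (HYS m Hm)); auto. }
      split. apply Rmult_le_pos. left; apply Rinv_0_lt_compat; auto. lra.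
      apply (Rmult_le_reg_l (INR w)); auto. rewrite <- Rmult_assoc, Rinv_r by lra. lra.
    - rewrite (zsum_const _ _ _ 0). ring. intros m Hm. apply (proj2 (HYS m Hm)); auto. }
  assert (HFa : 0 <= F a eps).
  { apply (ray_nonneg d (fun y => F y eps) (fun x i => f x eps i * Dd i) a Ha).
    - intros x Hx. apply HFgrad; auto.
    - intros x Hx i Hi. apply Rmult_le_pos. apply (proj1 (Hf x eps Hx Heps) i Hi). left; auto.
    - auto. }
  fold x0. unfold YS, Y in *.
  rewrite Hip0, HG0 in *. clearbody a.
  revert E1 E2 E3 HFa.
  generalize (zsum (- Z.of_nat L) (2 * L + w) (fun i : Z => ipD d Dd (g (shiftS L Xm i)) (shiftS L Xm i))).
  generalize (zsum (- Z.of_nat L) (2 * L + w) (fun i : Z => G (shiftS L Xm i))).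
  generalize (zsum (- Z.of_nat L) (2 * L + 1) (fun j : Z => F (Arow w (fun i : Z => g (shiftS L Xm i)) j) eps)).
  generalize (zsum (- Z.of_nat L) (2 * L + w) (fun i : Z => ipD d Dd (g (Xm i)) (Xm i))).
  generalize (zsum (- Z.of_nat L) (2 * L + w) (fun i : Z => G (Xm i))).
  generalize (zsum (- Z.of_nat L) (2 * L + 1) (fun j : Z => F (Arow w (fun i : Z => g (Xm i)) j) eps)).
  intros. unfold x0 in *. lra.
Qed.
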